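(* Let $(X_t)_{t\in T}$ be a real stochastic process indexed by a set $T$, let $k_1\geq 2$ be an integer, and let $(T_k)_{0\leq k\leq k_1}$ be subsets of $T$ with $|T_k|\leq e^{2^{k+1}}$ for $0\leq k\leq k_1$ and $T_{k_1}=T$. Let $\pi_k\colon T\to T_k$, $0\leq k\leq k_1$, be maps with $\pi_{k_1}(t)=t$ for all $t\in T$. Then for every integer $1\leq k_0\leq k_1-1$ and every $p$ with $2^{k_0-1}\leq p\leq 2^{k_0}$, \[ \Big\|\sup_{t\in T}|X_t|\Big\|_p\leq 3e^3\Big(\sup_{t\in T}\sum_{k=k_0+1}^{k_1}\|X_{\pi_k(t)}-X_{\pi_{k-1}(t)}\|_{2^k}+\sup_{t\in T_{k_0}}\|X_t\|_p\Big). \]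
   Context: $\|Y\|_p:=(\mathbb{E}|Y|^p)^{1/p}$ for a real random variable $Y$; $|T_k|$ is the cardinality (so $T$ is finite). *)

(* Defs.v *)
From HB Require Import structures.
From mathcomp Require Import all_boot all_order all_algebra.
From mathcomp Require Import all_classical all_reals all_analysis.
Set Implicit Arguments. Unset Strict Implicit. Unset Printing Implicit Defensive.
Import Order.TTheory GRing.Theory Num.Theory.
Local Open Scope ring_scope.

Definition pnorm d (Omega : measurableType d) (R : realType)
  (P : probability Omega R) (p : R) (Y : Omega -> R) : \bar R :=
  Lnorm P p%:E (EFin \o Y).

(* Main.v *)
Require Import Defs.
From HB Require Import structures.
From mathcomp Require Import all_boot all_order all_algebra.
From mathcomp Require Import all_classical all_reals all_analysis.
From mathcomp Require Import measurable_realfun.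
From mathcomp Require Import ring lra zify.
Import Order.TTheory GRing.Theory Num.Theory.
From mathcomp Require Import ring lra zify.
Import Order.TTheory GRing.Theory Num.Theory.
Local Open Scope ring_scope.

Section helpers.
Context d (Omega : measurableType d) (R : realType).
Variable mu : {measure set Omega -> \bar R}.

Lemma LnormE (r : R) (f : Omega -> R) :
  Lnorm mu r%:E (EFin \o f) = ((\int[mu]_x (`|f x| `^ r)%:E) `^ r^-1)%E.
Proof.
by rewrite unlock.
Qed.

Lemma Lnorm_le (r : R) (f g : Omega -> R) : 0 < r ->
  measurable_fun setT f -> measurable_fun setT g ->
  (forall w, `|f w| <= `|g w|) ->
  (Lnorm mu r%:E (EFin \o f) <= Lnorm mu r%:E (EFin \o g))%E.
Proof.
move=> r0 mf mg fg; rewrite !LnormE.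
have ri : (0 <= r^-1)%R by rewrite invr_ge0 ltW.
apply: (gt0_ler_poweR ri).
- by rewrite in_itv /= leey andbT; apply: integral_ge0 => x _; rewrite lee_fin powR_ge0.
- by rewrite in_itv /= leey andbT; apply: integral_ge0 => x _; rewrite lee_fin powR_ge0.
apply: ge0_le_integral => //.
- apply/measurable_EFinP; apply: (measurableT_comp (measurable_powR _)).
  exact: measurableT_comp.
- apply/measurable_EFinP; apply: (measurableT_comp (measurable_powR _)).
  exact: measurableT_comp.
- move=> x _; rewrite lee_fin; apply: ge0_ler_powR => //; first exact: ltW.
Qed.

Lemma Lnorm_root (r : R) (F : Omega -> R) : 0 < r -> (forall w, 0 <= F w) ->
  Lnorm mu r%:E (EFin \o (fun w => F w `^ r^-1)) = ((\int[mu]_x (F x)%:E) `^ r^-1)%E.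
Proof.
move=> r0 F0; rewrite LnormE; congr (_ `^ _)%E; apply: eq_integral => x _.
by rewrite ger0_norm ?powR_ge0// -powRrM mulVf ?gt_eqF// powRr1.
Qed.

Lemma int_sum_le (I : Type) (s : seq I) (Pr : pred I) (c b : I -> R)
    (h : I -> Omega -> R) :
  (forall i, measurable_fun setT (h i)) -> (forall i w, 0 <= h i w) ->
  (forall i, Pr i -> 0 <= c i) ->
  (forall i, Pr i -> (\int[mu]_x (h i x)%:E <= (b i)%:E)%E) ->
  (\int[mu]_x (\sum_(i <- s | Pr i) c i * h i x)%:E
     <= (\sum_(i <- s | Pr i) c i * b i)%:E)%E.
Proof.
move=> mh h0 c0 hb.
have -> : (\int[mu]_x (\sum_(i <- s | Pr i) c i * h i x)%:E =
    \int[mu]_x \sum_(i <- s) (if Pr i then (c i * h i x)%:E else 0))%E.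
  by apply: eq_integral => x _; rewrite -sumEFin big_mkcond.
rewrite ge0_integral_sum //; last first.
- by move=> i x _; case: ifP => // /c0 ci; rewrite lee_fin mulr_ge0.
- move=> i; case: (Pr i); last exact: measurable_cst.
  apply/measurable_EFinP; apply: measurable_funM => //; exact: measurable_cst.
rewrite -sumEFin [X in (_ <= X)%E]big_mkcond /=; apply: lee_sum => i _.
case: ifP => Pi; last by rewrite integral0.
under eq_integral => x _ do rewrite EFinM.
rewrite ge0_integralZl_EFin //.
all: try (by rewrite EFinM; apply: lee_wpmul2l; [rewrite lee_fin c0 | exact: hb]).
all: try (by move=> x _; rewrite lee_fin).
all: try (by apply/measurable_EFinP).
all: exact: c0.
Qed.

Lemma msum_cond (I : Type) (s : seq I) (Pr : pred I) (h : I -> Omega -> R) :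
  (forall i, measurable_fun setT (h i)) ->
  measurable_fun setT (fun x => \sum_(i <- s | Pr i) h i x).
Proof.
move=> mh; under eq_fun do rewrite big_mkcond.
apply: measurable_sum => i; case: (Pr i) => //; exact: measurable_cst.
Qed.

Lemma mbigmax (T : finType) (h : T -> Omega -> R) :
  (forall i, measurable_fun setT (h i)) ->
  measurable_fun setT (fun x => \big[Num.max/0]_(i : T) h i x).
Proof.
move=> mh; rewrite unlock; elim: (index_enum T) => [|t r IH] /=.
  exact: measurable_cst.
exact: measurable_maxr.
Qed.
End helpers.
Section reals.
Context (R : realType).

Lemma expR1_le3 : expR 1 <= 3 :> R.
Proof.
have h1 : 1 - 6^-1 <= expR (- 6^-1) :> R by apply: expR_ge1Dx.
have h2 : expR (6^-1) <= 6 / 5 :> R.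
  rewrite -[expR (6^-1)]invrK -expRN.
  have h5 : (5 / 6 : R) <= expR (- 6^-1) by apply: le_trans h1; lra.
  rewrite -[6 / 5]invf_div; rewrite lef_pV2 ?posrE ?expR_gt0 //; lra.
have -> : (1 : R) = 6^-1 * 6%:R by rewrite mulVf.
rewrite expRM_natr.
apply: (le_trans (y := (6/5)^+6)).
  by apply: lerXn2r; rewrite ?nnegrE ?expR_ge0 //; lra.
rewrite !exprS expr0; lra.
Qed.

Lemma key_ineq (x c p q : R) : 0 <= x -> 0 < c -> 0 < p -> p <= q ->
  x `^ p <= c `^ p + c `^ (p - q) * x `^ q.
Proof.
move=> x0 c0 p0 pq.
have [xc|cx] := leP x c.
  apply: ler_wpDr; first by rewrite mulr_ge0 ?powR_ge0.
  by apply: ge0_ler_powR; rewrite ?nnegrE // ltW.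
apply: ler_wpDl; first exact: powR_ge0.
have x0' : 0 < x by apply: lt_trans cx.
have -> : x `^ p = x `^ (p - q) * x `^ q.
  by rewrite -powRD ?gt_eqF ?implybT // subrK.
apply: ler_wpM2r; first exact: powR_ge0.
rewrite -(opprB q p) !powRN.
rewrite lef_pV2 ?posrE ?powR_gt0 //.
by apply: ge0_ler_powR; rewrite ?nnegrE ?subr_ge0 // ltW.
Qed.

Lemma geom_le1 (m n : nat) :
  \sum_(m.+1 <= k < (m + n).+1) (2^-1 : R) ^+ (k - m) = 1 - (2^-1) ^+ n.
Proof.
elim: n => [|n IH]; first by rewrite addn0 big_geq // expr0 subrr.
rewrite addnS big_nat_recr /=; last by rewrite ltnS leq_addr.
rewrite IH (_ : ((m + n).+1 - m)%N = n.+1); last by rewrite -addnS addKn.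
rewrite exprS; lra.
Qed.

Lemma pow23 (p : R) : 1 <= p -> 2 `^ p + 1 <= 3 `^ p.
Proof.
move=> p1.
have e2 : 2 `^ p = 2 `^ (p - 1) * 2 `^ 1 :> R.
  by rewrite -powRD ?subrK // pnatr_eq0 implybT.
have e3 : 3 `^ p = 3 `^ (p - 1) * 3 `^ 1 :> R.
  by rewrite -powRD ?subrK // pnatr_eq0 implybT.
rewrite powRr1 // in e2; rewrite powRr1 // in e3.
have h1 : 2 `^ (p - 1) <= 3 `^ (p - 1) :> R.
  by apply: ge0_ler_powR; rewrite ?nnegrE ?subr_ge0 //; lra.
have h2 : 1 <= 3 `^ (p - 1) :> R.
  have := @ler_powR R 3 ltac:(lra) 0 (p - 1); rewrite powRr0; apply; lra.
rewrite e2 e3; nra.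
Qed.
End reals.

Section sums.
Context (R : realType).
Lemma ler_sum_term (I : eqType) (s : seq I) (Pr : pred I) (F : I -> R) i :
  uniq s -> i \in s -> Pr i -> (forall j, Pr j -> 0 <= F j) ->
  F i <= \sum_(j <- s | Pr j) F j.
Proof.
move=> us si Pi F0; rewrite big_mkcond (bigD1_seq i) //= Pi lerDl.
by apply: sumr_ge0 => j _; case: ifP => // /F0.
Qed.

Lemma lee_sum_term (I : eqType) (s : seq I) (Pr : pred I) (F : I -> \bar R) i :
  uniq s -> i \in s -> Pr i -> (forall j, Pr j -> 0 <= F j)%E ->
  (F i <= \sum_(j <- s | Pr j) F j)%E.
Proof.
move=> us si Pi F0; rewrite big_mkcond (bigD1_seq i) //= Pi; apply: leeDl.
by apply: sume_ge0 => j _; case: ifP => // /F0.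
Qed.
End sums.

Lemma pow2_gap m j : (2 ^ m + j <= 2 ^ (m + j))%N.
Proof.
rewrite expnD.
have h1 : (j < 2 ^ j)%N by apply: ltn_expl.
have h2 : (0 < 2 ^ m)%N by rewrite expn_gt0.
move: h1 h2; set a := (2 ^ j)%N; set b := (2 ^ m)%N => h1 h2.
nia.
Qed.

Lemma bigR_bound (R : realType) (p e3 : R) (k0 k1 : nat) (N : nat -> nat) :
  1 <= p -> p <= (2 ^ k0)%:R -> 0 < e3 -> (k0 < k1)%N ->
  (forall k, (k0 < k <= k1)%N -> (N k)%:R <= e3 `^ (2 ^ k)%:R) ->
  (2 * e3) `^ p + \sum_(k0.+1 <= k < k1.+1 | (k0.+1 <= k < k1.+1)%N && true)
     (2 * e3) `^ (p - (2 ^ k)%:R) * (N k)%:R <= (3 * e3) `^ p.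
Proof.
move=> p1 pk e0 k01 hN.
have p0 : 0 < p by apply: lt_le_trans p1.
rewrite -big_nat_cond.
have hterm k : (k0 < k <= k1)%N ->
    (2 * e3) `^ (p - (2 ^ k)%:R) * (N k)%:R <= e3 `^ p * (2^-1) ^+ (k - k0).
  move=> /andP[hk hk'].
  apply: le_trans (ler_wpM2l (powR_ge0 _ _) (hN k _)) _; first by rewrite hk.
  have E : e3 `^ (p - (2 ^ k)%:R) * e3 `^ (2 ^ k)%:R = e3 `^ p.
    rewrite -powRD ?subrK //; apply/implyP => _; by rewrite gt_eqF.
  rewrite (powRM _ (ler0n _ 2) (ltW e0)) -mulrA E mulrC.
  apply: ler_wpM2l; first exact: powR_ge0.
  rewrite exprVn -powR_invn //.
  apply: ler_powR; first by lra.
  have g := pow2_gap k0 (k - k0); rewrite (subnKC (ltnW hk)) in g.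
  have g' : ((2 ^ k0)%:R + (k - k0)%:R <= (2 ^ k)%:R :> R) by rewrite -natrD ler_nat.
  lra.
apply: le_trans (lerD (lexx _) (_ : _ <= e3 `^ p)) _.
  have hs : \sum_(k0.+1 <= k < k1.+1) (2 * e3) `^ (p - (2 ^ k)%:R) * (N k)%:R <=
      \sum_(k0.+1 <= k < k1.+1) e3 `^ p * (2^-1) ^+ (k - k0).
    rewrite big_seq [X in _ <= X]big_seq; apply: ler_sum => k.
    by rewrite mem_index_iota => hk; apply: hterm.
  apply: le_trans hs _; rewrite -mulr_sumr.
  have := geom_le1 R k0 (k1 - k0); rewrite (subnKC (ltnW k01)) => ->.
  rewrite -[X in _ <= X]mulr1; apply: ler_wpM2l; first exact: powR_ge0.
  by rewrite lerBlDr lerDl exprn_ge0.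
rewrite (powRM _ (ler0n _ 2) (ltW e0)) (powRM _ (ler0n _ 3) (ltW e0)).
rewrite -[X in _ + X]mul1r -mulrDl; apply: ler_wpM2r; first exact: powR_ge0.
exact: pow23.
Qed.

Theorem proposition6p1
  (d : measure_display) (Omega : measurableType d) (R : realType)
  (P : probability Omega R) (T : finType) (X : T -> {RV P >-> R})
  (k1 : nat) (Tk : nat -> {set T}) (pi : nat -> T -> T)
  (hk1 : (2 <= k1)%N)
  (hcard : forall k, (k <= k1)%N -> (#|Tk k|)%:R <= expR (2 ^ k.+1)%:R :> R)
  (hTk1 : Tk k1 = [set: T])
  (hpi : forall k t, (k <= k1)%N -> pi k t \in Tk k)
  (hpik1 : forall t, pi k1 t = t)
  (k0 : nat) (p : R)
  (hk0 : (1 <= k0 <= k1.-1)%N)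
  (hp : (2 ^ k0.-1)%:R <= p <= (2 ^ k0)%:R) :
  (pnorm P p (fun w => \big[Num.max/0%R]_(t : T) `|X t w|%R)
   <= (3 * expR 3)%:E *
      (\big[Order.max/0%E]_(t : T)
         (\sum_(k0.+1 <= k < k1.+1)
            pnorm P ((2 ^ k)%:R)%R (fun w => (X (pi k t) w - X (pi k.-1 t) w)%R))
       + \big[Order.max/0%E]_(t in Tk k0) pnorm P p (fun w => X t w)))%E.
Proof.
move: hk0 hp => /andP[k0ge1 k0le] /andP[plo phi].
have k0k1 : (k0 < k1)%N by lia.
have p1 : 1 <= p by apply: le_trans plo; rewrite ler1n expn_gt0.
have p0 : 0 < p by apply: lt_le_trans p1.
pose nrm k (u v : T) := pnorm P ((2 ^ k)%:R) (fun w => X u w - X v w).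
pose S := \big[Order.max/0%E]_(t : T)
   \sum_(k0.+1 <= k < k1.+1) nrm k (pi k t) (pi k.-1 t).
pose A' := \big[Order.max/0%E]_(t in Tk k0) pnorm P p (fun w => X t w).
change (pnorm P p (fun w => \big[Num.max/0%R]_(t : T) `|X t w|%R)
   <= (3 * expR 3)%:E * (S + A'))%E.
have nrm_ge0 k u v : (0 <= nrm k u v)%E by rewrite /nrm /pnorm; exact: Lnorm_ge0.
have S_ge0 : (0 <= S)%E by exact: bigmax_ge_id.
have A_ge0 : (0 <= A')%E by exact: bigmax_ge_id.
have e3_gt0 : (0 < 3 * expR 3 :> R) by rewrite mulr_gt0 ?expR_gt0.
have [Sfin|Sinf] := boolP (S \is a fin_num); last first.
  have -> : S = +oo%E by move: Sinf; rewrite ge0_fin_numE // ltey negbK => /eqP.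
  rewrite addye; last by rewrite gt_eqF // (lt_le_trans _ A_ge0) // ltNy0.
  by rewrite muleC gt0_mulye ?leey // lte_fin.
have [Afin|Ainf] := boolP (A' \is a fin_num); last first.
  have -> : A' = +oo%E by move: Ainf; rewrite ge0_fin_numE // ltey negbK => /eqP.
  rewrite addey; last by rewrite gt_eqF // (lt_le_trans _ S_ge0) // ltNy0.
  by rewrite muleC gt0_mulye ?leey // lte_fin.
set s := fine S; set a := fine A'.
have Se : S = s%:E by rewrite /s fineK.
have Ae : A' = a%:E by rewrite /a fineK.
apply/lee_addgt0Pr => e e0.

pose e3 := expR 3 : R.
have e3_0 : 0 < e3 by exact: expR_gt0.
pose eps := e / (3 * e3).
have eps0 : 0 < eps by rewrite divr_gt0.
have s0 : 0 <= s by exact: fine_ge0.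
have a0 : 0 <= a by exact: fine_ge0.
pose C := s + eps.
have C0 : 0 < C by rewrite /C ltr_wpDl.
pose dl := eps / k1%:R.
have dl0 : 0 < dl by rewrite divr_gt0 // ltr0n (leq_trans _ hk1).
pose beta k u v := fine (nrm k u v) + dl.
have beta0 k u v : 0 < beta k u v by rewrite /beta ltr_wpDl // fine_ge0.
pose g k u v w := `|X u w - X v w| / beta k u v.
have g0 k u v w : 0 <= g k u v w by rewrite /g divr_ge0 // ltW.
pose q k := (2 ^ k)%:R : R.
pose Pk k := [set (pi k t, pi k.-1 t) | t : T].
pose c := 2 * e3.
have c0 : 0 < c by rewrite /c mulr_gt0.
pose Rw w := c `^ p + \sum_(k0.+1 <= k < k1.+1)
   c `^ (p - q k) * \sum_(x in Pk k) 1 * (g k x.1 x.2 w) `^ (q k).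
pose Aw w := \sum_(t in Tk k0) 1 * `|X t w| `^ p.
pose Ar w := Aw w `^ p^-1.
pose Mr w := (C `^ p * Rw w) `^ p^-1.
have Rw0 w : 0 <= Rw w.
  apply: addr_ge0; first exact: powR_ge0.
  apply: sumr_ge0 => k _; apply: mulr_ge0; first exact: powR_ge0.
  by apply: sumr_ge0 => x _; rewrite mul1r powR_ge0.
have Aw0 w : 0 <= Aw w by apply: sumr_ge0 => x _; rewrite mul1r powR_ge0.
have mX t : measurable_fun setT (X t) by exact: measurable_funPT.
have mg k u v : measurable_fun setT (g k u v).
  apply: measurable_funM; last exact: measurable_cst.
  apply: (measurableT_comp (@normr_measurable R _)).
  exact: measurable_funB.
have mRw : measurable_fun setT Rw.
  apply: measurable_funD; first exact: measurable_cst.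
  apply: msum_cond => k; apply: measurable_funM; first exact: measurable_cst.
  apply: msum_cond => x; apply: measurable_funM; first exact: measurable_cst.
  exact: (measurableT_comp (measurable_powR _)).
have mAw : measurable_fun setT Aw.
  apply: msum_cond => t; apply: measurable_funM; first exact: measurable_cst.
  apply: (measurableT_comp (measurable_powR _)).
  exact: (measurableT_comp (@normr_measurable R _)).
have mAr : measurable_fun setT Ar by exact: (measurableT_comp (measurable_powR _)).
have mMr : measurable_fun setT Mr.
  apply: (measurableT_comp (measurable_powR _)).
  by apply: measurable_funM => //; exact: measurable_cst.

have Slt : (S < +oo)%E by rewrite -ge0_fin_numE.
have nrmS t : (\sum_(k0.+1 <= k < k1.+1) nrm k (pi k t) (pi k.-1 t) <= S)%E.
  exact: (le_bigmax _ (fun t => \sum_(k0.+1 <= k < k1.+1) nrm k (pi k t) (pi k.-1 t))).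
have nrm_fin t k : (k0 < k <= k1)%N -> nrm k (pi k t) (pi k.-1 t) \is a fin_num.
  move=> hk; rewrite ge0_fin_numE //; apply: le_lt_trans Slt.
  apply: le_trans (nrmS t).
  apply: (@lee_sum_term _ _ _ predT (fun k => nrm k (pi k t) (pi k.-1 t)) k).
  - exact: iota_uniq.
  - by rewrite mem_index_iota ltnS.
  - by [].
  - by move=> j _.
have qk_ge k : (k0 < k)%N -> p <= q k.
  move=> hk; apply: le_trans phi _; rewrite /q ler_nat leq_pexp2l //; exact: ltnW.
have betaS t : \sum_(k0.+1 <= k < k1.+1) beta k (pi k t) (pi k.-1 t) <= C.
  rewrite /beta big_split /= sumr_const_nat.
  have -> : \sum_(k0.+1 <= k < k1.+1) fine (nrm k (pi k t) (pi k.-1 t)) =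
      fine (\sum_(k0.+1 <= k < k1.+1) nrm k (pi k t) (pi k.-1 t)).
    rewrite big_nat_cond [in RHS]big_nat_cond sum_fine // => k /andP[/andP[hk hk'] _].
    by apply: nrm_fin; rewrite hk -ltnS.
  apply: lerD.
    rewrite /s; apply: fine_le; last exact: nrmS.
      by rewrite ge0_fin_numE ?(le_lt_trans (nrmS t)) // sume_ge0.
    by [].
  rewrite /dl -[_ *+ _]mulr_natr.
  have hn : ((k1.+1 - k0.+1)%:R : R) <= k1%:R by rewrite ler_nat subSS leq_subr.
  have hk : (0:R) < k1%:R by rewrite ltr0n (leq_trans _ hk1).
  apply: le_trans (ler_wpM2l _ hn) _; first by rewrite divr_ge0 // ltW.
  by rewrite divfK ?gt_eqF.

have gR k t w : (k0 < k <= k1)%N -> g k (pi k t) (pi k.-1 t) w <= Rw w `^ p^-1.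
  move=> /andP[hk hk'].
  set x := g k (pi k t) (pi k.-1 t) w.
  have xp : x `^ p <= Rw w.
    apply: le_trans (@key_ineq _ _ _ _ _ (g0 _ _ _ _) c0 p0 (qk_ge k hk)) _.
    rewrite /Rw lerD2l.
    apply: le_trans (@ler_sum_term _ _ _ predT (fun k => c `^ (p - q k) *
      \sum_(x in Pk k) 1 * (g k x.1 x.2 w) `^ (q k)) k _ _ _ _).
    - apply: ler_wpM2l; first exact: powR_ge0.
      apply: le_trans (@ler_sum_term _ _ _ (fun y => y \in Pk k)
        (fun y => 1 * g k y.1 y.2 w `^ q k) (pi k t, pi k.-1 t) _ _ _ _).
      + by rewrite mul1r.
      + exact: index_enum_uniq.
      + exact: mem_index_enum.
      + by apply/imsetP; exists t.
      + by move=> y _; rewrite mul1r powR_ge0.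
    - exact: iota_uniq.
    - by rewrite mem_index_iota hk ltnS.
    - by [].
    - move=> j _; apply: mulr_ge0; first exact: powR_ge0.
      by apply: sumr_ge0 => y _; rewrite mul1r powR_ge0.
  have -> : x = (x `^ p) `^ p^-1 by rewrite -powRrM mulfV ?gt_eqF // powRr1 //; exact: g0.
  apply: ge0_ler_powR => //.
  all: try by rewrite nnegrE ?powR_ge0.
  by rewrite invr_ge0 ltW.
have pw w : `|\big[Num.max/0%R]_(t : T) `|X t w| | <= `|(Ar \+ Mr) w|.
  have ArMr0 : 0 <= Ar w + Mr w by rewrite addr_ge0 ?powR_ge0.
  rewrite /= (ger0_norm ArMr0) ger0_norm; last exact: bigmax_ge_id.
  apply: bigmax_le => // t _.
  have tele : X t w = X (pi k0 t) w +
      \sum_(k0.+1 <= k < k1.+1) (X (pi k t) w - X (pi k.-1 t) w).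
    rewrite (telescope_sumr_eq (fun k => X (pi k.-1 t) w)) //=; last exact: ltnW.
    by rewrite hpik1 addrC subrK.
  rewrite {1}tele; apply: le_trans (ler_normD _ _) _; apply: lerD.
  - have -> : `|X (pi k0 t) w| = (`|X (pi k0 t) w| `^ p) `^ p^-1.
      by rewrite -powRrM mulfV ?gt_eqF // powRr1.
    apply: ge0_ler_powR => //.
    all: try by rewrite nnegrE ?powR_ge0.
    1: by rewrite invr_ge0 ltW.
    rewrite -[X in X <= _]mul1r.
    apply: (@ler_sum_term _ _ _ (fun y => y \in Tk k0) (fun y => 1 * `|X y w| `^ p) (pi k0 t)).
    + exact: index_enum_uniq.
    + exact: mem_index_enum.
    + by apply: hpi; exact: ltnW.
    + by move=> j _; rewrite mul1r powR_ge0.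
  - apply: le_trans (ler_norm_sum _ _ _) _.
    have -> : Mr w = C * Rw w `^ p^-1.
      by rewrite /Mr powRM ?powR_ge0 // -powRrM mulfV ?gt_eqF // powRr1 // ltW.
    apply: le_trans (ler_wpM2r (powR_ge0 _ _) (betaS t)).
    rewrite mulr_suml big_seq [X in _ <= X]big_seq; apply: ler_sum => k.
    rewrite mem_index_iota => /andP[hk hk'].
    have -> : `|X (pi k t) w - X (pi k.-1 t) w| =
        beta k (pi k t) (pi k.-1 t) * g k (pi k t) (pi k.-1 t) w.
      by rewrite /g mulrC divfK ?gt_eqF.
    by apply: ler_wpM2l; [exact: ltW | apply: gR; rewrite hk -ltnS].
have mmax : measurable_fun setT (fun w => \big[Num.max/0%R]_(t : T) `|X t w|).
  apply: mbigmax => t; exact: (measurableT_comp (@normr_measurable R _)).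
rewrite /pnorm.
apply: le_trans (@Lnorm_le _ _ _ P p _ (Ar \+ Mr) p0 mmax (measurable_funD mAr mMr) pw) _.
apply: le_trans (@minkowski_EFin _ _ _ P Ar Mr p mAr mMr p1) _.

have pinv0 : 0 <= p^-1 by rewrite invr_ge0 ltW.
have int_ge0 (f : Omega -> R) : (forall x, 0 <= f x) ->
    (\int[P]_x (f x)%:E \in `[0, +oo])%E.
  by move=> f0; rewrite in_itv /= leey andbT; apply: integral_ge0 => x _; rewrite lee_fin.
have cardA : #|Tk k0|%:R `^ p^-1 <= 3 * e3.
  have hc := hcard k0 (ltnW k0k1).
  apply: le_trans (ge0_ler_powR pinv0 _ _ hc) _.
  - by rewrite nnegrE.
  - by rewrite nnegrE expR_ge0.
  rewrite -expRM.
  have e4 : expR 4 <= 3 * e3.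
    have -> : (4 : R) = 1 + 3 by [].
    rewrite expRD; apply: ler_wpM2r; [exact: expR_ge0 | exact: expR1_le3].
  apply: le_trans e4; rewrite ler_expR ler_pdivrMr //.
  have h4 : (2 ^ k0.+1 = 4 * 2 ^ k0.-1)%N.
    by rewrite -[in LHS](prednK k0ge1) !expnS mulnA.
  rewrite h4 natrM; apply: ler_wpM2l => //.
have bndA : (Lnorm P p%:E (EFin \o Ar) <= (3 * e3 * a)%:E)%E.
  rewrite /Ar (@Lnorm_root _ _ _ P p Aw p0 Aw0).
  have hI : (\int[P]_x (Aw x)%:E <= (#|Tk k0|%:R * a `^ p)%:E)%E.
    apply: le_trans (@int_sum_le _ _ _ P T (index_enum T) (fun y => y \in Tk k0)
      (fun _ => 1) (fun _ => a `^ p) (fun y w => `|X y w| `^ p) _ _ _ _) _.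
    - move=> y; apply: (measurableT_comp (measurable_powR _)).
      exact: (measurableT_comp (@normr_measurable R _)).
    - by move=> y w; rewrite powR_ge0.
    - by [].
    - move=> y hy.
      have -> : (\int[P]_x (`|X y x| `^ p)%:E = (Lnorm P p%:E (EFin \o X y)) `^ p)%E.
        by rewrite powR_Lnorm ?gt_eqF.
      rewrite -poweR_EFin; apply: (gt0_ler_poweR (ltW p0)).
      + by rewrite in_itv /= Lnorm_ge0 leey.
      + by rewrite in_itv /= lee_fin a0 leey.
      + rewrite -Ae; exact: (le_bigmax_cond _ (fun t => pnorm P p (fun w => X t w)) hy).
    - by rewrite lee_fin sumr_const mul1r mulr_natl.
  apply: le_trans (gt0_ler_poweR pinv0 (int_ge0 _ Aw0) _ hI) _.
    by rewrite in_itv /= lee_fin leey andbT mulr_ge0 ?powR_ge0.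
  rewrite poweR_EFin lee_fin powRM ?powR_ge0 // -powRrM mulfV ?gt_eqF // powRr1 //.
  by apply: ler_wpM2r.

have qk0 k : 0 < q k by rewrite /q ltr0n expn_gt0.
have hN k : (k0 < k <= k1)%N -> #|Pk k|%:R <= e3 `^ (2 ^ k)%:R.
  move=> /andP[hk hk'].
  have h1 : (#|Pk k| <= #|Tk k| * #|Tk k.-1|)%N.
    rewrite -cardsX; apply: subset_leq_card; apply/fintype.subsetP => y /imsetP[t _ ->].
    rewrite !inE /= !hpi //; exact: leq_trans (leq_pred k) hk'.
  apply: le_trans (_ : _ <= #|Tk k|%:R * #|Tk k.-1|%:R) _; first by rewrite -natrM ler_nat.
  have k1' : (k.-1 <= k1)%N by exact: leq_trans (leq_pred k) hk'.
  apply: le_trans (ler_pM (ler0n _ _) (ler0n _ _) (hcard k hk') (hcard k.-1 k1')) _.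
  rewrite -expRD /e3 -expRM ler_expR (prednK (leq_ltn_trans (leq0n _) hk)) expnS natrM.
  lra.
have bndM : (Lnorm P p%:E (EFin \o Mr) <= (3 * e3 * C)%:E)%E.
  have CR0 w : 0 <= C `^ p * Rw w by rewrite mulr_ge0 ?powR_ge0.
  rewrite /Mr (@Lnorm_root _ _ _ P p (fun w => C `^ p * Rw w) p0 CR0).
  have hR : (\int[P]_x (Rw x)%:E <= ((3 * e3) `^ p)%:E)%E.
    rewrite /Rw; under eq_integral do rewrite EFinD.
    rewrite ge0_integralD //; first last.
    all: try (by move=> x _; rewrite lee_fin powR_ge0).
    all: try (exact: measurable_cst).
    all: try (move=> x _; rewrite lee_fin; apply: sumr_ge0 => k _; apply: mulr_ge0;
      [exact: powR_ge0 | by apply: sumr_ge0 => y _; rewrite mul1r powR_ge0]).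
    all: try (apply/measurable_EFinP;
      apply: msum_cond => k; apply: measurable_funM; [exact: measurable_cst|];
      apply: msum_cond => x; apply: measurable_funM; [exact: measurable_cst|];
      exact: (measurableT_comp (measurable_powR _))).
    rewrite integral_cst //.
    rewrite [X in (X + _ <= _)%E](_ : _ = (c `^ p)%:E); last first.
      by transitivity ((c `^ p)%:E * 1)%E; [congr (_ * _)%E; exact: probability_setT | exact: mule1].
    under eq_integral do rewrite big_nat_cond.
    apply: le_trans (leeD (lexx _) (@int_sum_le _ _ _ P nat (index_iota k0.+1 k1.+1)
      (fun k => (k0.+1 <= k < k1.+1)%N && true) (fun k => c `^ (p - q k))
      (fun k => #|Pk k|%:R)
      (fun k w => \sum_(y in Pk k) 1 * g k y.1 y.2 w `^ q k) _ _ _ _)) _.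
    - move=> k; apply: msum_cond => x; apply: measurable_funM; first exact: measurable_cst.
      exact: (measurableT_comp (measurable_powR _)).
    - by move=> k w; apply: sumr_ge0 => y _; rewrite mul1r powR_ge0.
    - by move=> k _; exact: powR_ge0.
    - move=> k /andP[/andP[hk hk'] _].
      apply: le_trans (@int_sum_le _ _ _ P (T * T)%type (index_enum _) (fun y => y \in Pk k)
        (fun _ => 1) (fun _ => 1) (fun y w => g k y.1 y.2 w `^ q k) _ _ _ _) _.
      + by move=> y; exact: (measurableT_comp (measurable_powR _)).
      + by move=> y w; exact: powR_ge0.
      + by [].
      + move=> y /imsetP[t _ ->] /=.
        have nf : nrm k (pi k t) (pi k.-1 t) \is a fin_num by apply: nrm_fin; rewrite hk.
        set u := pi k t; set v := pi k.-1 t.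
        have bi0 : 0 <= (beta k u v)^-1 by rewrite invr_ge0 ltW.
        have -> : (\int[P]_x (g k u v x `^ q k)%:E = ((beta k u v)^-1 `^ q k)%:E *
            \int[P]_x (`|X u x - X v x| `^ q k)%:E)%E.
          rewrite -ge0_integralZl_EFin //.
          all: try (by move=> x _; rewrite lee_fin powR_ge0).
          all: try (exact: powR_ge0).
          all: try (apply/measurable_EFinP; apply: (measurableT_comp (measurable_powR _));
            apply: (measurableT_comp (@normr_measurable R _)); exact: measurable_funB).
          apply: eq_integral => x _.
          by rewrite /g (powRM _ (normr_ge0 _) bi0) mulrC EFinM.
        have -> : (\int[P]_x (`|X u x - X v x| `^ q k)%:E = (nrm k u v) `^ q k)%E.
          by rewrite /nrm /pnorm powR_Lnorm ?gt_eqF.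
        rewrite -(fineK nf) poweR_EFin -EFinM lee_fin -(powRM _ bi0 (fine_ge0 (nrm_ge0 _ _ _))).
        have hb : (beta k u v)^-1 * fine (nrm k u v) <= 1.
          by rewrite mulrC ler_pdivrMr // mul1r /beta lerDl ltW.
        have hx : (beta k u v)^-1 * fine (nrm k u v) \in Num.nneg.
          by rewrite nnegrE mulr_ge0 // fine_ge0.
        have := @ge0_ler_powR _ (q k) (ltW (qk0 k)) _ 1 hx (ler01 : (1 : R) \in Num.nneg) hb.
        by rewrite powR1.
      + by rewrite lee_fin sumr_const mul1r.
    rewrite -EFinD lee_fin.
    exact: (@bigR_bound R p e3 k0 k1 (fun k => #|Pk k|) p1 phi e3_0 k0k1 hN).
  under eq_integral do rewrite EFinM.
  rewrite ge0_integralZl_EFin //; last 3 first.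
  - by move=> x _; rewrite lee_fin.
  - exact/measurable_EFinP.
  - exact: powR_ge0.
  have hCR : ((C `^ p)%:E * \int[P]_x (Rw x)%:E <= (C `^ p * (3 * e3) `^ p)%:E)%E.
    by rewrite EFinM; apply: lee_wpmul2l; [rewrite lee_fin powR_ge0 | exact: hR].
  apply: le_trans (gt0_ler_poweR pinv0 _ _ hCR) _.
  - by rewrite in_itv /= leey andbT mule_ge0 ?lee_fin ?powR_ge0 // integral_ge0 // => x _; rewrite lee_fin.
  - by rewrite in_itv /= leey andbT lee_fin mulr_ge0 ?powR_ge0.
  rewrite poweR_EFin lee_fin -(powRM _ (ltW C0) (ltW e3_gt0)) -powRrM mulfV ?gt_eqF //.
  by rewrite powRr1 ?(mulr_ge0 (ltW C0) (ltW e3_gt0)) // mulrC.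
apply: le_trans (leeD bndA bndM) _.
rewrite Se Ae -EFinD -EFinM -EFinD lee_fin /C /eps /e3.
rewrite mulrDr [_ * (e / _)]mulrC divfK ?gt_eqF //.
rewrite mulrDr addrA [3 * expR 3 * a + _]addrC.
exact: lexx.
Qed.
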